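(* Let $\mathbb{F}$ be an algebraically closed field of characteristic $0$, $D$ an $\mathbb{F}$-vector space with $\dim D=3$, and $\Gamma\subseteq D^{\ast}$ an additive subgroup with $\Gamma\simeq\mathbb{Z}^3$ and $\bigcap_{\alpha\in\Gamma}\ker\alpha=\{0\}$. Let $M=\bigoplus_{\theta\in\Gamma}M_\theta$ be a $\Gamma$-graded $\mathcal{S}(\Gamma,D)$-module with $\dim M_\theta=1$, $M_\theta=\mathbb{F}w_\theta$. Fix a $\mathbb{Z}$-basis $\{\varepsilon_1,\varepsilon_2,\varepsilon_3\}$ of $\Gamma$ and nonzero $\partial_1\in\ker\varepsilon_2\cap\ker\varepsilon_3$, $\partial_2\in\ker\varepsilon_1\cap\ker\varepsilon_3$, $\partial_3\in\ker\varepsilon_1\cap\ker\varepsilon_2$. Then there exists $\nu\in\Gamma$ satisfying at least one of the following six conditions: (a) $x^{-\varepsilon_2}\partial_1.x^{\varepsilon_2}\partial_1.w_\nu\neq0$ and $x^{-\varepsilon_3}\partial_1.x^{\varepsilon_3}\partial_1.w_\nu\neq0$; (b) $x^{-\varepsilon_1}\partial_2.x^{\varepsilon_1}\partial_2.w_\nu\neq0$ and $x^{-\varepsilon_3}\partial_2.x^{\varepsilon_3}\partial_2.w_\nu\neq0$; (c) $x^{-\varepsilon_1}\partial_3.x^{\varepsilon_1}\partial_3.w_\nu\neq0$ and $x^{-\varepsilon_2}\partial_3.x^{\varepsilon_2}\partial_3.w_\nu\neq0$; (a') $x^{-\varepsilon_3}\partial_1.x^{\varepsilon_3}\partial_1.w_\nu=0$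 and $x^{-\varepsilon_3}\partial_2.x^{\varepsilon_3}\partial_2.w_\nu=0$; (b') $x^{-\varepsilon_1}\partial_2.x^{\varepsilon_1}\partial_2.w_\nu=0$ and $x^{-\varepsilon_1}\partial_3.x^{\varepsilon_1}\partial_3.w_\nu=0$; (c') $x^{-\varepsilon_2}\partial_1.x^{\varepsilon_2}\partial_1.w_\nu=0$ and $x^{-\varepsilon_2}\partial_3.x^{\varepsilon_2}\partial_3.w_\nu=0$.
   Context: $\mathcal{S}(\Gamma,D)$ is the Lie algebra spanned by $x^\alpha\partial$ with $\alpha\in\Gamma\setminus\{0\}$, $\partial\in\ker\alpha$ (linear in $\partial$), with bracket $[x^\alpha\partial_1,x^\beta\partial_2]=x^{\alpha+\beta}(\beta(\partial_1)\partial_2-\alpha(\partial_2)\partial_1)$; graded modules satisfy $x^\alpha\partial.M_\theta\subseteq M_{\alpha+\theta}$. *)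

(* Defs.v *)
From HB Require Import structures.
From mathcomp Require Import all_boot all_order all_algebra.
Set Implicit Arguments. Unset Strict Implicit. Unset Printing Implicit Defensive.
Import Order.TTheory GRing.Theory Num.Theory.
Local Open Scope ring_scope.

Definition dual (F : fieldType) (D : vectType F) := 'Hom(D, F^o).

Definition inZspan3 (V : zmodType) (e1 e2 e3 x : V) : Prop :=
  exists a b c : int, x = e1 *~ a + e2 *~ b + e3 *~ c.

(* [act a d m] is the action x^a d . m of the generator x^a d of S(Gamma,D)
   (a in Gamma \ {0}, d in ker a) on m in M; [w t] is the chosen basis
   vector of M_t (t in Gamma).  [graded_S_module Gam act w] says that M is a
   Gamma-graded S(Gamma,D)-module M = (+)_{t in Gamma} M_t with M_t = F w_t
   of dimension 1. *)
Definition graded_S_module (F : fieldType) (D : vectType F)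
  (Gam : dual D -> Prop) (M : lmodType F)
  (act : dual D -> D -> M -> M) (w : dual D -> M) : Prop :=
      (forall a d, Gam a -> a != 0 -> a d = 0 ->
         forall (c : F) (m1 m2 : M), act a d (c *: m1 + m2) = c *: act a d m1 + act a d m2) /\
      (forall a, Gam a -> a != 0 -> forall (c : F) d1 d2, a d1 = 0 -> a d2 = 0 ->
         forall m, act a (c *: d1 + d2) m = c *: act a d1 m + act a d2 m) /\
      (* representation of the Lie bracket
         [x^a d1, x^b d2] = x^(a+b) (b(d1) d2 - a(d2) d1)  (which is 0 if a+b=0) *)
      (forall a b d1 d2, Gam a -> a != 0 -> Gam b -> b != 0 -> a d1 = 0 -> b d2 = 0 ->
         forall m, act a d1 (act b d2 m) - act b d2 (act a d1 m) =
           (if a + b == 0 then 0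
            else act (a + b) ((b d1 : F) *: d2 - (a d2 : F) *: d1) m)) /\
      (forall a d t, Gam a -> a != 0 -> a d = 0 -> Gam t ->
         exists c : F, act a d (w t) = c *: w (a + t)) /\
      (forall t, Gam t -> w t != 0) /\
      (forall (s : seq (dual D)) (c : dual D -> F), uniq s ->
         (forall t, t \in s -> Gam t) ->
         \sum_(t <- s) c t *: w t = 0 -> forall t, t \in s -> c t = 0) /\
      (forall m : M, exists (s : seq (dual D)) (c : dual D -> F),
         (forall t, t \in s -> Gam t) /\ m = \sum_(t <- s) c t *: w t).

(* Main.v *)
Require Import Defs.
From HB Require Import structures.
From mathcomp Require Import all_boot all_order all_algebra.
From Stdlib Require Import Classical.
Import Order.TTheory GRing.Theory Num.Theory.
Local Open Scope ring_scope.

Module Aux.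
Set Implicit Arguments. Unset Strict Implicit.

Section Core.
Variables (F : fieldType) (D : vectType F) (M : lmodType F).
Variables (Gam : dual D -> Prop) (act : dual D -> D -> M -> M) (w : dual D -> M).
Hypothesis HM : graded_S_module Gam act w.

Lemma act_lin a d : Gam a -> a != 0 -> a d = 0 ->
  forall (c : F) m1 m2, act a d (c *: m1 + m2) = c *: act a d m1 + act a d m2.
Proof. by case: HM => H _; apply: H. Qed.

Lemma act_m0 a d : Gam a -> a != 0 -> a d = 0 -> act a d 0 = 0.
Proof.
move=> Ga a0 ad; have := act_lin Ga a0 ad 1 0 0.
rewrite !scale1r addr0 => H; apply: (addrI (act a d 0)); by rewrite addr0 -H.
Qed.

Lemma actZ a d c m : Gam a -> a != 0 -> a d = 0 -> act a d (c *: m) = c *: act a d m.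
Proof.
move=> Ga a0 ad; have := act_lin Ga a0 ad c m 0.
by rewrite addr0 act_m0 // addr0.
Qed.

Lemma act_dlin a : Gam a -> a != 0 -> forall (c : F) d1 d2, a d1 = 0 -> a d2 = 0 ->
   forall m, act a (c *: d1 + d2) m = c *: act a d1 m + act a d2 m.
Proof. by case: HM => _ [H _]; apply: H. Qed.

Lemma act_d0 a m : Gam a -> a != 0 -> act a 0 m = 0.
Proof.
move=> Ga a0; have := act_dlin Ga a0 1 (linear0 a) (linear0 a) m.
rewrite !scale1r addr0 => H; apply: (addrI (act a 0 m)); by rewrite addr0 -H.
Qed.

Lemma act_dZ a c d m : Gam a -> a != 0 -> a d = 0 -> act a (c *: d) m = c *: act a d m.
Proof.
move=> Ga a0 ad; have := act_dlin Ga a0 c ad (linear0 a) m.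
by rewrite addr0 act_d0 // addr0.
Qed.

Lemma grade a d t : Gam a -> a != 0 -> a d = 0 -> Gam t ->
  exists c : F, act a d (w t) = c *: w (a + t).
Proof. by case: HM => _ [_ [_ [H _]]]; apply: H. Qed.

Lemma wnz t : Gam t -> w t != 0.
Proof. by case: HM => _ [_ [_ [_ [H _]]]]; apply: H. Qed.

Lemma brk a b d1 d2 m : Gam a -> a != 0 -> Gam b -> b != 0 -> a d1 = 0 -> b d2 = 0 ->
  a d2 = 0 -> Gam (a + b) -> a + b != 0 ->
  act a d1 (act b d2 m) - act b d2 (act a d1 m) = b d1 *: act (a + b) d2 m.
Proof.
move=> Ga a0 Gb b0 ad1 bd2 ad2 Gab ab0.
case: HM => _ [_ [H _]]; rewrite H // (negbTE ab0) ad2 scale0r subr0.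
by rewrite act_dZ // add_lfunE ad2 bd2 addr0.
Qed.

Lemma comm a b d1 d2 m : Gam a -> a != 0 -> Gam b -> b != 0 -> a d1 = 0 -> b d2 = 0 ->
  (a + b = 0 \/ (a d2 = 0 /\ b d1 = 0 /\ Gam (a + b))) ->
  act a d1 (act b d2 m) = act b d2 (act a d1 m).
Proof.
move=> Ga a0 Gb b0 ad1 bd2 Hc; apply/eqP; rewrite -subr_eq0; apply/eqP.
case: HM => _ [_ [H _]]; rewrite H //.
case: Hc => [->|[ad2 [bd1 Gab]]]; rewrite ?eqxx //.
case: eqP => // /eqP ab0.
by rewrite ad2 bd1 !scale0r subrr act_d0.
Qed.

Lemma transport za zd ta td x : Gam za -> za != 0 -> za zd = 0 ->
  Gam ta -> ta != 0 -> ta td = 0 -> Gam x ->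
  act za zd (act ta td (w x)) = act ta td (act za zd (w x)) ->
  act za zd (w x) = 0 -> act ta td (w x) != 0 -> act za zd (w (ta + x)) = 0.
Proof.
move=> Gz z0 zd0 Gt t0 td0 Gx Hc Z0 T0.
have [c Hcc] := grade Gt t0 td0 Gx.
move: Hc; rewrite Z0 act_m0 // Hcc actZ //.
move: T0; rewrite Hcc scaler_eq0 negb_or => /andP [c0 _] /eqP.
by rewrite scaler_eq0 (negbTE c0) => /eqP.
Qed.

Lemma brk0 za zd ta td x : Gam za -> za != 0 -> za zd = 0 ->
  Gam ta -> ta != 0 -> ta td = 0 -> Gam x ->
  act za zd (w x) = 0 -> act za zd (w (ta + x)) = 0 ->
  act ta td (act za zd (w x)) - act za zd (act ta td (w x)) = 0.
Proof.
move=> Gz z0 zd0 Gt t0 td0 Gx Z0 Z1.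
have [c Hcc] := grade Gt t0 td0 Gx.
by rewrite Z0 Hcc actZ // Z1 scaler0 act_m0 // subrr.
Qed.

Lemma L1a a d b d' x : Gam a -> a != 0 -> a d = 0 -> Gam b -> b != 0 -> b d' = 0 ->
  act b d' (act a d (w x)) != 0 -> act a d (w x) != 0.
Proof. move=> Ga a0 ad Gb b0 bd; apply: contra => /eqP ->; by rewrite act_m0. Qed.

Lemma L1b a d b d' x : Gam a -> a != 0 -> a d = 0 -> Gam b -> b != 0 -> b d' = 0 -> Gam x ->
  act b d' (act a d (w x)) != 0 -> act b d' (w (a + x)) != 0.
Proof.
move=> Ga a0 ad Gb b0 bd Gx; have [c ->] := grade Ga a0 ad Gx.
by rewrite actZ // scaler_eq0 negb_or => /andP [].
Qed.

Hypothesis HGD : forall a b, Gam a -> Gam b -> Gam (a + b).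
Hypothesis HGN : forall a, Gam a -> Gam (- a).

Definition Pnz d e y := act (- e) d (act e d (w y)) != 0.

Lemma F2 e d x : Gam e -> e != 0 -> e d = 0 -> Gam x -> Pnz d e x = Pnz d e (e + x).
Proof.
move=> Ge e0 ed Gx; rewrite /Pnz.
have Gne := HGN Ge.
have ne0 : - e != 0 by rewrite oppr_eq0.
have ned : (- e) d = 0 by rewrite opp_lfunE ed oppr0.
have [al Ha] := grade Ge e0 ed Gx.
have Gex := HGD Ge Gx.
have [be Hb] := grade Gne ne0 ned Gex.
rewrite addKr in Hb.
rewrite Ha actZ // Hb scalerA.
rewrite (@comm (- e) e d d) //; last by left; rewrite addNr.
rewrite Hb actZ // Ha scalerA.
by rewrite !scaler_eq0 !negb_or !wnz // mulrC.
Qed.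

Lemma F2b e d x : Gam e -> e != 0 -> e d = 0 -> Gam x -> Pnz d e x = Pnz d e (- e + x).
Proof. move=> Ge e0 ed Gx; by rewrite (@F2 e d (- e + x)) ?addNKr //; apply: HGD => //; apply: HGN. Qed.

Lemma caseA eb ec da db dc x : Gam eb -> Gam ec -> eb != 0 -> ec != 0 -> eb + ec != 0 ->
  eb da = 0 -> ec da = 0 -> ec db = 0 -> eb dc = 0 -> ec dc != 0 -> eb db != 0 ->
  Gam x -> Pnz da eb x -> Pnz db ec (- ec + x) -> Pnz da eb (- ec + x) ->
  act ec da (w x) != 0.
Proof.
move=> Geb Gec eb0 ec0 ebc0 ebda ecda ecdb ebdc ecdc ebdb Gx P1 P2 P3.
apply/negP => /eqP N0.
have Gnc := HGN Gec; have Gnb := HGN Geb.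
have nc0 : - ec != 0 by rewrite oppr_eq0.
have nb0 : - eb != 0 by rewrite oppr_eq0.
have ncdb : (- ec) db = 0 by rewrite opp_lfunE ecdb oppr0.
have ncda : (- ec) da = 0 by rewrite opp_lfunE ecda oppr0.
have nbda : (- eb) da = 0 by rewrite opp_lfunE ebda oppr0.
have Gbc := HGD Geb Gec.
have bcda : (eb + ec) da = 0 by rewrite add_lfunE ebda ecda addr0.
have Gx' : Gam (- ec + x) by apply: HGD.
have T0 : act eb da (w x) != 0 by apply: (@L1a eb da (- eb) da x).
have T0' : act eb da (w (- ec + x)) != 0 by apply: (@L1a eb da (- eb) da _).
have B0 : act (- ec) db (w x) != 0.
  have := @L1b ec db (- ec) db (- ec + x) Gec ec0 ecdb Gnc nc0 ncdb Gx' P2.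
  by rewrite addNKr.
have N1 : act ec da (w (eb + x)) = 0.
  apply: (@transport ec da eb da x) => //.
  by apply: comm => //; right; split => //; split => //; apply: HGD.
have N2 : act ec da (w (- ec + x)) = 0.
  apply: (@transport ec da (- ec) db x) => //.
  by apply: comm => //; left; rewrite addrN.
have N3 : act ec da (w (eb + (- ec + x))) = 0.
  apply: (@transport ec da eb da (- ec + x)) => //.
  by apply: comm => //; right; split => //; split => //; apply: HGD.
have Q0 : act (eb + ec) da (w x) = 0.
  have := @brk eb ec dc da (w x) Geb eb0 Gec ec0 ebdc ecda ebda Gbc ebc0.
  rewrite (@brk0 ec da eb dc x) // => /esym/eqP.
  by rewrite scaler_eq0 (negbTE ecdc) /= => /eqP.
have Q1 : act (eb + ec) da (w (- ec + x)) = 0.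
  have := @brk eb ec dc da (w (- ec + x)) Geb eb0 Gec ec0 ebdc ecda ebda Gbc ebc0.
  rewrite (@brk0 ec da eb dc (- ec + x)) // => /esym/eqP.
  by rewrite scaler_eq0 (negbTE ecdc) /= => /eqP.
have E : - ec + (eb + ec) = eb by rewrite addrC addrK.
have bcdb : (eb + ec) db != 0 by rewrite add_lfunE ecdb addr0.
have := @brk (- ec) (eb + ec) db da (w x) Gnc nc0 Gbc ebc0 ncdb bcda ncda
   (ltac:(by rewrite E)) (ltac:(by rewrite E)).
rewrite (@brk0 (eb + ec) da (- ec) db x) // => /esym/eqP.
rewrite scaler_eq0 (negbTE bcdb) /= E => /eqP P0.
by move: T0; rewrite P0 eqxx.
Qed.

Lemma caseB eb ec da db dc y : Gam eb -> Gam ec -> eb != 0 -> ec != 0 -> eb - ec != 0 ->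
  eb da = 0 -> ec da = 0 -> ec db = 0 -> eb dc = 0 -> ec dc != 0 -> eb db != 0 ->
  Gam y -> Pnz da eb y -> Pnz db ec y -> Pnz da eb (ec + y) ->
  act (- ec) da (w y) != 0.
Proof.
move=> Geb Gec eb0 ec0 ebc0 ebda ecda ecdb ebdc ecdc ebdb Gy P1 P2 P3.
apply/negP => /eqP N0.
have Gnc := HGN Gec; have Gnb := HGN Geb.
have nc0 : - ec != 0 by rewrite oppr_eq0.
have nb0 : - eb != 0 by rewrite oppr_eq0.
have ncdb : (- ec) db = 0 by rewrite opp_lfunE ecdb oppr0.
have ncda : (- ec) da = 0 by rewrite opp_lfunE ecda oppr0.
have nbda : (- eb) da = 0 by rewrite opp_lfunE ebda oppr0.
have Gbc := HGD Geb Gnc.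
have bcda : (eb - ec) da = 0 by rewrite add_lfunE ebda ncda addr0.
have Gy' : Gam (ec + y) by apply: HGD.
have T0 : act eb da (w y) != 0 by apply: (@L1a eb da (- eb) da y).
have T0' : act eb da (w (ec + y)) != 0 by apply: (@L1a eb da (- eb) da _).
have B0 : act ec db (w y) != 0 by apply: (@L1a ec db (- ec) db y).
have N1 : act (- ec) da (w (eb + y)) = 0.
  apply: (@transport (- ec) da eb da y) => //.
  by apply: comm => //; right; split => //; split => //; apply: HGD.
have N2 : act (- ec) da (w (ec + y)) = 0.
  apply: (@transport (- ec) da ec db y) => //.
  by apply: comm => //; left; rewrite addNr.
have N3 : act (- ec) da (w (eb + (ec + y))) = 0.
  apply: (@transport (- ec) da eb da (ec + y)) => //.
  by apply: comm => //; right; split => //; split => //; apply: HGD.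
have ncdc : (- ec) dc != 0 by rewrite opp_lfunE oppr_eq0.
have Q0 : act (eb - ec) da (w y) = 0.
  have := @brk eb (- ec) dc da (w y) Geb eb0 Gnc nc0 ebdc ncda ebda Gbc ebc0.
  rewrite (@brk0 (- ec) da eb dc y) // => /esym/eqP.
  by rewrite scaler_eq0 (negbTE ncdc) /= => /eqP.
have Q1 : act (eb - ec) da (w (ec + y)) = 0.
  have := @brk eb (- ec) dc da (w (ec + y)) Geb eb0 Gnc nc0 ebdc ncda ebda Gbc ebc0.
  rewrite (@brk0 (- ec) da eb dc (ec + y)) // => /esym/eqP.
  by rewrite scaler_eq0 (negbTE ncdc) /= => /eqP.
have E : ec + (eb - ec) = eb by rewrite addrC subrK.
have bcdb : (eb - ec) db != 0 by rewrite add_lfunE ncdb addr0.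
have := @brk ec (eb - ec) db da (w y) Gec ec0 Gbc ebc0 ecdb bcda ecda
   (ltac:(by rewrite E)) (ltac:(by rewrite E)).
rewrite (@brk0 (eb - ec) da ec db y) // => /esym/eqP.
rewrite scaler_eq0 (negbTE bcdb) /= E => /eqP P0.
by move: T0; rewrite P0 eqxx.
Qed.

Lemma core eb ec da db dc nu : Gam eb -> Gam ec -> eb != 0 -> ec != 0 -> eb + ec != 0 ->
  eb - ec != 0 ->
  eb da = 0 -> ec da = 0 -> ec db = 0 -> eb dc = 0 -> ec dc != 0 -> eb db != 0 ->
  (forall y, Gam y -> Pnz db ec y -> Pnz da eb y) ->
  Gam nu -> Pnz db ec nu -> Pnz da ec nu.
Proof.
move=> Geb Gec eb0 ec0 ebc0 ebc0' ebda ecda ecdb ebdc ecdc ebdb Himp Gnu Pn.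
have Gnc := HGN Gec.
have nc0 : - ec != 0 by rewrite oppr_eq0.
have ncda : (- ec) da = 0 by rewrite opp_lfunE ecda oppr0.
have [a Ha] := grade Gec ec0 ecda Gnu.
have Gy : Gam (ec + nu) by apply: HGD.
have Gm : Gam (- ec + nu) by apply: HGD.
rewrite /Pnz Ha actZ // scaler_eq0 negb_or; apply/andP; split.
- apply/negP => /eqP a0.
  have := @caseA eb ec da db dc nu Geb Gec eb0 ec0 ebc0 ebda ecda ecdb ebdc ecdc ebdb Gnu
    (Himp _ Gnu Pn) (ltac:(by rewrite -F2b)) (ltac:(apply: Himp => //; by rewrite -F2b)).
  by rewrite Ha a0 scale0r eqxx.
- have P2 : Pnz db ec (ec + nu) by rewrite -F2.
  have P4 : Pnz db ec (ec + (ec + nu)) by rewrite -F2 //.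
  apply: (@caseB eb ec da db dc (ec + nu)) => //; apply: Himp => //; by apply: HGD.
Qed.
End Core.

Lemma lfunMz (F : fieldType) (D : vectType F) (f : dual D) x (n : int) :
  (f *~ n) x = f x *~ n.
Proof.
have H k : (f *+ k) x = f x *+ k.
  elim: k => [|k IH]; first by rewrite !mulr0n zero_lfunE.
  by rewrite !mulrS add_lfunE IH.
case: n => n; first by rewrite -!pmulrn H.
by rewrite !NegzE !mulrNz opp_lfunE -!pmulrn H.
Qed.
End Aux.
Import Aux.

Theorem lemma3p5 (F : closedFieldType) (HcharF : [pchar F] =i pred0)
  (D : vectType F) (HdimD : \dim {:D} = 3%N)
  (e1 e2 e3 : dual D)
  (Hbasis : forall a b c : int, e1 *~ a + e2 *~ b + e3 *~ c = 0 ->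
              [/\ a = 0, b = 0 & c = 0])
  (Hker : forall x : D, (forall al, inZspan3 e1 e2 e3 al -> al x = 0) -> x = 0)
  (M : lmodType F) (act : dual D -> D -> M -> M) (w : dual D -> M)
  (HM : graded_S_module (inZspan3 e1 e2 e3) act w)
  (d1 d2 d3 : D)
  (Hd1 : [/\ d1 != 0, e2 d1 = 0 & e3 d1 = 0])
  (Hd2 : [/\ d2 != 0, e1 d2 = 0 & e3 d2 = 0])
  (Hd3 : [/\ d3 != 0, e1 d3 = 0 & e2 d3 = 0]) :
  exists nu, inZspan3 e1 e2 e3 nu /\
    ((act (- e2) d1 (act e2 d1 (w nu)) != 0 /\ act (- e3) d1 (act e3 d1 (w nu)) != 0)
  \/ (act (- e1) d2 (act e1 d2 (w nu)) != 0 /\ act (- e3) d2 (act e3 d2 (w nu)) != 0)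
  \/ (act (- e1) d3 (act e1 d3 (w nu)) != 0 /\ act (- e2) d3 (act e2 d3 (w nu)) != 0)
  \/ (act (- e3) d1 (act e3 d1 (w nu)) = 0 /\ act (- e3) d2 (act e3 d2 (w nu)) = 0)
  \/ (act (- e1) d2 (act e1 d2 (w nu)) = 0 /\ act (- e1) d3 (act e1 d3 (w nu)) = 0)
  \/ (act (- e2) d1 (act e2 d1 (w nu)) = 0 /\ act (- e2) d3 (act e2 d3 (w nu)) = 0)).
Proof.
case: Hd1 => d10 e2d1 e3d1; case: Hd2 => d20 e1d2 e3d2; case: Hd3 => d30 e1d3 e2d3.
have HGD : forall a b, inZspan3 e1 e2 e3 a -> inZspan3 e1 e2 e3 b -> inZspan3 e1 e2 e3 (a + b).
  move=> a b [x1 [y1 [z1 ->]]] [x2 [y2 [z2 ->]]].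
  exists (x1 + x2), (y1 + y2), (z1 + z2).
  by rewrite !mulrzDr addrACA (addrACA (e1 *~ x1)).
have HGN : forall a, inZspan3 e1 e2 e3 a -> inZspan3 e1 e2 e3 (- a).
  move=> a [x1 [y1 [z1 ->]]]; exists (- x1), (- y1), (- z1).
  by rewrite !mulrNz -!opprD.
have G0 : inZspan3 e1 e2 e3 0 by exists 0, 0, 0; rewrite !mulr0z !addr0.
have G2 : inZspan3 e1 e2 e3 e2 by exists 0, 1, 0; rewrite !mulr0z mulr1z add0r addr0.
have G3 : inZspan3 e1 e2 e3 e3 by exists 0, 0, 1; rewrite !mulr0z mulr1z !add0r.
have nz : forall a b c : int, (a, b, c) != (0, 0, 0) -> e1 *~ a + e2 *~ b + e3 *~ c != 0.
  move=> a b c H; apply/eqP => /Hbasis [a0 b0 c0]; move: H; by rewrite a0 b0 c0 eqxx.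
have e20 : e2 != 0.
  by have := nz 0 1 0 isT; rewrite !mulr0z mulr1z add0r addr0.
have e30 : e3 != 0.
  by have := nz 0 0 1 isT; rewrite !mulr0z mulr1z !add0r.
have e230 : e2 + e3 != 0.
  by have := nz 0 1 1 isT; rewrite !mulr0z !mulr1z add0r.
have e2m30 : e2 - e3 != 0.
  by have := nz 0 1 (-1) isT; rewrite !mulr0z mulr1z mulrN1z add0r.
have e3m20 : e3 - e2 != 0 by rewrite -oppr_eq0 opprB.
have e320 : e3 + e2 != 0 by rewrite addrC.
have kerZ : forall x : D, e1 x = 0 -> e2 x = 0 -> e3 x = 0 -> x = 0.
  move=> x h1 h2 h3; apply: Hker => al [a [b [c ->]]].
  by rewrite !add_lfunE !lfunMz h1 h2 h3 !mul0rz !addr0.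
have e2d2 : e2 d2 != 0 by apply/eqP => h; move: d20; rewrite (kerZ d2) ?eqxx.
have e3d3 : e3 d3 != 0 by apply/eqP => h; move: d30; rewrite (kerZ d3) ?eqxx.
apply: NNPP => Hno.
have Hn : forall nu, inZspan3 e1 e2 e3 nu ->
  ~ ((act (- e2) d1 (act e2 d1 (w nu)) != 0 /\ act (- e3) d1 (act e3 d1 (w nu)) != 0)
  \/ (act (- e1) d2 (act e1 d2 (w nu)) != 0 /\ act (- e3) d2 (act e3 d2 (w nu)) != 0)
  \/ (act (- e1) d3 (act e1 d3 (w nu)) != 0 /\ act (- e2) d3 (act e2 d3 (w nu)) != 0)
  \/ (act (- e3) d1 (act e3 d1 (w nu)) = 0 /\ act (- e3) d2 (act e3 d2 (w nu)) = 0)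
  \/ (act (- e1) d2 (act e1 d2 (w nu)) = 0 /\ act (- e1) d3 (act e1 d3 (w nu)) = 0)
  \/ (act (- e2) d1 (act e2 d1 (w nu)) = 0 /\ act (- e2) d3 (act e2 d3 (w nu)) = 0)).
  by move=> nu Gnu H; apply: Hno; exists nu.
have Hs : forall y, inZspan3 e1 e2 e3 y -> act (- e3) d2 (act e3 d2 (w y)) != 0 -> act (- e2) d1 (act e2 d1 (w y)) != 0.
  move=> y Gy => h23; apply/eqP => h12.
  have [h21|h21] := eqVneq (act (- e1) d2 (act e1 d2 (w y))) 0;
  have [h31|h31] := eqVneq (act (- e1) d3 (act e1 d3 (w y))) 0;
  have [h32|h32] := eqVneq (act (- e2) d3 (act e2 d3 (w y))) 0;
  apply: (Hn y Gy); tauto.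
have Ht : forall y, inZspan3 e1 e2 e3 y -> act (- e2) d3 (act e2 d3 (w y)) != 0 -> act (- e3) d1 (act e3 d1 (w y)) != 0.
  move=> y Gy => h32; apply/eqP => h13.
  have [h21|h21] := eqVneq (act (- e1) d2 (act e1 d2 (w y))) 0;
  have [h31|h31] := eqVneq (act (- e1) d3 (act e1 d3 (w y))) 0;
  have [h23|h23] := eqVneq (act (- e3) d2 (act e3 d2 (w y))) 0;
  apply: (Hn y Gy); tauto.
have Cs := @core _ _ _ _ act w HM HGD HGN e2 e3 d1 d2 d3 0 G2 G3 e20 e30 e230 e2m30
  e2d1 e3d1 e3d2 e2d3 e3d3 e2d2 Hs G0.
have Ct := @core _ _ _ _ act w HM HGD HGN e3 e2 d1 d3 d2 0 G3 G2 e30 e20 e320 e3m20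
  e3d1 e2d1 e2d3 e3d2 e2d2 e3d3 Ht G0.
rewrite /Pnz in Cs Ct.
have [h23|h23] := eqVneq (act (- e3) d2 (act e3 d2 (w 0))) 0.
- have [h13|h13] := eqVneq (act (- e3) d1 (act e3 d1 (w 0))) 0.
    by apply: (Hn 0 G0); tauto.
  have [h12|h12] := eqVneq (act (- e2) d1 (act e2 d1 (w 0))) 0.
    have [h32|h32] := eqVneq (act (- e2) d3 (act e2 d3 (w 0))) 0.
      by apply: (Hn 0 G0); tauto.
    by move: (Ct h32); rewrite h12 eqxx.
  by apply: (Hn 0 G0); tauto.
- have h13 := Cs h23; have h12 := Hs 0 G0 h23.
  by apply: (Hn 0 G0); tauto.
Qed.
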